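(* Let $n>0$ be an integer and $S\subseteq\mathbb{N}^{\mathbb{N}}$. Suppose $S=\bigcup_{i\in\mathbb{N}}\bigcap_{j\in\mathbb{N}}X_{ij}=\bigcap_{i\in\mathbb{N}}\bigcup_{j\in\mathbb{N}}Y_{ij}$, where all $X_{ij}$ and $Y_{ij}$ are $\mathbf{\Delta}^0_n$ subsets of $\mathbb{N}^{\mathbb{N}}$. Then there is a single family $(Z_{ij})_{i,j\in\mathbb{N}}$ of $\mathbf{\Delta}^0_n$ sets such that $S=\bigcup_{i\in\mathbb{N}}\bigcap_{j\in\mathbb{N}}Z_{ij}=\bigcap_{i\in\mathbb{N}}\bigcup_{j\in\mathbb{N}}Z_{ij}$.
   Context: Baire space $\mathbb{N}^{\mathbb{N}}$ carries the product of discrete topologies; $\mathbf{\Delta}^0_n$ denotes the boldface Borel pointclass (sets that are both $\mathbf{\Sigma}^0_n$ and $\mathbf{\Pi}^0_n$). *)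

(* Defs.v *)
From Stdlib Require Import Arith.

Definition Baire := nat -> nat.

Definition bset := Baire -> Prop.

Definition bcompl (A : bset) : bset := fun x => ~ A x.

(* Open sets in the product of discrete topologies: every point of A has a
   basic neighbourhood (all sequences sharing its first m entries) inside A. *)
Definition bopen (A : bset) : Prop :=
  forall x, A x -> exists m, forall y, (forall k, k < m -> y k = x k) -> A y.

(* Sigma n A  <->  A is boldface Sigma^0_n  (n >= 1);  level 0 is empty.
   Sigma^0_1 = open; Sigma^0_{m+1} = countable unions of Pi^0_m sets,
   where Pi^0_m = complements of Sigma^0_m sets. *)
Fixpoint Sigma (n : nat) (A : bset) : Prop :=
  match n with
  | 0 => False
  | S m =>
      match m with
      | 0 => bopen A
      | S _ => exists B : nat -> bset,
                 (forall k, Sigma m (bcompl (B k))) /\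
                 (forall x, A x <-> exists k, B k x)
      end
  end.

Definition Pi (n : nat) (A : bset) : Prop := Sigma n (bcompl A).

Definition Delta (n : nat) (A : bset) : Prop := Sigma n A /\ Pi n A.

(* Main.v *)
Require Import Defs.
From Stdlib Require Import Arith.
From Stdlib Require Import Classical Lia Cantor.

Lemma Sigma_ext n A A' : Sigma n A -> (forall x, A x <-> A' x) -> Sigma n A'.
Proof.
  destruct n as [|[|m]]; simpl; auto.
  - intros H E x Hx. apply E in Hx. destruct (H x Hx) as [k Hk].
    exists k. intros y Hy. apply E. auto.
  - intros [B [HB HE]] E. exists B. split; auto.
    intro x. rewrite <- E. auto.
Qed.

Definition bunion (A B : bset) : bset := fun x => A x \/ B x.
Definition binter (A B : bset) : bset := fun x => A x /\ B x.

Lemma Sigma_closed n : (forall A B, Sigma n A -> Sigma n B -> Sigma n (bunion A B))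
  /\ (forall A B, Sigma n A -> Sigma n B -> Sigma n (binter A B)).
Proof.
  induction n as [|n IH].
  - simpl; tauto.
  - destruct n as [|m].
    + simpl. split.
      * intros A B HA HB x [Hx|Hx].
        -- destruct (HA x Hx) as [k Hk]. exists k. intros y Hy. left; auto.
        -- destruct (HB x Hx) as [k Hk]. exists k. intros y Hy. right; auto.
      * intros A B HA HB x [Hx Hx'].
        destruct (HA x Hx) as [k Hk]. destruct (HB x Hx') as [k' Hk'].
        exists (max k k'). intros y Hy. split.
        -- apply Hk. intros i Hi. apply Hy. lia.
        -- apply Hk'. intros i Hi. apply Hy. lia.
    + destruct IH as [IHU IHI]. split.
      * intros A B [BA [HA EA]] [BB [HB EB]].
        exists (fun k => if Nat.eqb (fst (of_nat k)) 0 then BA (snd (of_nat k))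
                         else BB (snd (of_nat k))).
        split.
        -- intro k. destruct (Nat.eqb _ 0); auto.
        -- intro x. unfold bunion. rewrite EA, EB. split.
           ++ intros [[k Hk]|[k Hk]].
              ** exists (to_nat (0, k)). rewrite cancel_of_to. simpl. auto.
              ** exists (to_nat (1, k)). rewrite cancel_of_to. simpl. auto.
           ++ intros [k Hk]. destruct (Nat.eqb _ 0); eauto.
      * intros A B [BA [HA EA]] [BB [HB EB]].
        exists (fun k => binter (BA (fst (of_nat k))) (BB (snd (of_nat k)))).
        split.
        -- intro k. eapply Sigma_ext. apply IHU; [apply (HA (fst (of_nat k)))|apply (HB (snd (of_nat k)))].
           intro x. unfold bunion, binter, bcompl. tauto.
        -- intro x. unfold binter. rewrite EA, EB. split.
           ++ intros [[k Hk] [k' Hk']]. exists (to_nat (k, k')).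
              rewrite cancel_of_to. simpl. auto.
           ++ intros [k [H1 H2]]. eauto.
Qed.

Lemma Delta_ext n A A' : Delta n A -> (forall x, A x <-> A' x) -> Delta n A'.
Proof.
  intros [H1 H2] E. split. apply (Sigma_ext n A A' H1 E).
  unfold Pi in *. apply (Sigma_ext n (bcompl A) (bcompl A') H2). intro x. unfold bcompl. rewrite E. tauto.
Qed.

Lemma Delta_compl n A : Delta n A -> Delta n (bcompl A).
Proof.
  intros [H1 H2]. split; auto. unfold Pi.
  eapply Sigma_ext; [apply H1|]. intro x. unfold bcompl. tauto.
Qed.

Lemma Delta_union n A B : Delta n A -> Delta n B -> Delta n (bunion A B).
Proof.
  intros [H1 H2] [H3 H4]. split.
  - apply Sigma_closed; auto.
  - unfold Pi. eapply Sigma_ext. apply (proj2 (Sigma_closed n)); [apply H2|apply H4].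
    intro x. unfold bcompl, binter, bunion. tauto.
Qed.

Lemma Delta_inter n A B : Delta n A -> Delta n B -> Delta n (binter A B).
Proof.
  intros [H1 H2] [H3 H4]. split.
  - apply Sigma_closed; auto.
  - unfold Pi. eapply Sigma_ext. apply (proj1 (Sigma_closed n)); [apply H2|apply H4].
    intro x. unfold bcompl, binter, bunion. tauto.
Qed.

Lemma Delta_bex n (F : nat -> bset) (HF : forall k, Delta n (F k)) j :
  Delta n (fun x => exists k, k <= j /\ F k x).
Proof.
  induction j.
  - eapply Delta_ext. apply (HF 0). intro x. split.
    + intro H. exists 0. auto.
    + intros [k [Hk H]]. replace k with 0 in H by lia. auto.
  - eapply Delta_ext. apply (Delta_union _ _ _ IHj (HF (S j))).
    intro x. unfold bunion. split.
    + intros [[k [Hk H]]|H]; [exists k|exists (S j)]; split; auto; lia.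
    + intros [k [Hk H]]. destruct (Nat.eq_dec k (S j)).
      * subst; auto.
      * left. exists k. split; auto; lia.
Qed.

Lemma Delta_ball n (F : nat -> bset) (HF : forall k, Delta n (F k)) j :
  Delta n (fun x => forall k, k <= j -> F k x).
Proof.
  eapply Delta_ext. apply Delta_compl.
  apply (Delta_bex n (fun k => bcompl (F k))). intro k; apply Delta_compl; auto.
  intro x. unfold bcompl. split.
  - intros H k Hk. apply NNPP. intro H'. apply H. eauto.
  - intros H [k [Hk H']]. auto.
Qed.

Lemma bounded_ex (P : nat -> nat -> Prop) a :
  (forall b, b <= a -> exists k, P b k) -> exists K, forall b, b <= a -> exists k, k <= K /\ P b k.
Proof.
  induction a; intro H.
  - destruct (H 0 (le_n 0)) as [k Hk]. exists k. intros b Hb.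
    replace b with 0 by lia. eauto.
  - destruct IHa as [K HK]. intros b Hb; apply H; lia.
    destruct (H (S a) (le_n _)) as [k Hk]. exists (max K k). intros b Hb.
    destruct (Nat.eq_dec b (S a)).
    + subst. exists k. split; auto; lia.
    + destruct (HK b ltac:(lia)) as [k' [Hk' Hp]]. exists k'. split; auto; lia.
Qed.

Theorem mainTheorem12 (n : nat) (hn : 0 < n) (S : bset)
  (X Y : nat -> nat -> bset)
  (hX : forall i j, Delta n (X i j)) (hY : forall i j, Delta n (Y i j))
  (hSX : forall x, S x <-> exists i, forall j, X i j x)
  (hSY : forall x, S x <-> forall i, exists j, Y i j x) :
  exists Z : nat -> nat -> bset,
    (forall i j, Delta n (Z i j)) /\
    (forall x, S x <-> exists i, forall j, Z i j x) /\
    (forall x, S x <-> forall i, exists j, Z i j x).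
Proof.
  set (G := fun j x => exists a, a <= j /\ ((forall k, k <= j -> X a k x) /\
                          forall b, b <= a -> exists k, k <= j /\ Y b k x)).
  assert (HG : forall j, Delta n (G j)).
  { intro j. apply (Delta_bex n (fun a x => (forall k, k <= j -> X a k x) /\
                          forall b, b <= a -> exists k, k <= j /\ Y b k x)).
    intro a. apply (Delta_inter n (fun x => forall k, k <= j -> X a k x)).
    - apply Delta_ball. auto.
    - apply (Delta_ball n (fun b x => exists k, k <= j /\ Y b k x)).
      intro b. apply Delta_bex. auto. }
  assert (Hin : forall x, S x -> exists N, forall m, N <= m -> G m x).
  { intros x Hx. destruct (proj1 (hSX x) Hx) as [a0 Ha0]. pose proof (proj1 (hSY x) Hx) as Hx'.
    destruct (bounded_ex (fun b k => Y b k x) a0) as [K HK]. intros; auto.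
    exists (max a0 K). intros m Hm. exists a0. split; [lia|]. split; auto.
    intros b Hb. destruct (HK b Hb) as [k [Hk Hy]]. exists k. split; auto; lia. }
  assert (Hout : forall x, ~ S x -> exists N, forall m, N <= m -> ~ G m x).
  { intros x Hx.
    assert (Hb0 : exists b0, forall k, ~ Y b0 k x).
    { apply NNPP. intro H. apply Hx. apply hSY. intro i. apply NNPP. intro H2.
      apply H. exists i. intros k Hk. apply H2. eauto. }
    destruct Hb0 as [b0 Hb0].
    destruct (bounded_ex (fun a k => ~ X a k x) b0) as [K HK].
    { intros a Ha. apply NNPP. intro H. apply Hx. apply hSX. exists a.
      intro j. apply NNPP. intro H2. apply H. eauto. }
    exists K. intros m Hm [a [Ha [HXa HYa]]].
    destruct (le_lt_dec a b0).
    - destruct (HK a l) as [k [Hk Hn]]. apply Hn. apply HXa. lia.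
    - destruct (HYa b0 ltac:(lia)) as [k [_ Hy]]. eapply Hb0; eauto. }
  exists (fun i j => G (i + j)). split; [|split].
  - intros; apply HG.
  - intro x. split.
    + intro Hx. destruct (Hin x Hx) as [N HN]. exists N. intro j. apply HN. lia.
    + intros [i Hi]. apply NNPP. intro Hx. destruct (Hout x Hx) as [N HN].
      apply (HN (i + N)). lia. apply Hi.
  - intro x. split.
    + intros Hx i. destruct (Hin x Hx) as [N HN]. exists N. apply HN. lia.
    + intro H. apply NNPP. intro Hx. destruct (Hout x Hx) as [N HN].
      destruct (H N) as [j Hj]. apply (HN (N + j)). lia. apply Hj.
Qed.
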